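(* Let $Q$ be a closed polyhedral partially ordered abelian group, $\tau$ a face of $Q_+$, and $M$ a $Q$-module. Then $M$ is $\tau$-coprimary if and only if every nonzero homogeneous element of $M$ divides a $\tau$-coprimary element, where $y\in M_q$ divides $y'\in M_{q'}$ if $q\preceq q'$ and the structure map $M_q\to M_{q'}$ sends $y$ to $y'$.
   Context: A partially ordered abelian group is an abelian group $Q$ generated by a submonoid $Q_+$ whose only unit is $0$; $q\preceq q'$ iff $q'-q\in Q_+$. A face is a submonoid $\sigma\subseteq Q_+$ with $Q_+\setminus\sigma$ an ideal of $Q_+$; $Q$ is polyhedral if it has finitely many faces. A ray is a face that is totally ordered by $\preceq$. $Q$ is closed if for each face $\tau$, the set $Q_+\setminus\tau$ equals $\bigcup_{\rho}(\rho\setminus\{0\})+Q_+$, the union over rays $\rho\not\subseteq\tau$. A $Q$-module is a $Q$-graded vector space $M=\bigoplus_q M_q$ over a field $k$ with compatible structure maps $M_q\to M_{q'}$ for $q\preceq q'$ (equivalently a $Q$-graded $k[Q_+]$-module). For a face $\tau$, $M_\tau=M\otimes_{k[Q_+]}k[Q_++\mathbb Z\tau]$ ($\mathbb Z\tau$ the subgroup generated by $\tau$), with natural map $M\to M_\tau$; $\Gamma_\tau M=\bigcap_{\tau'\not\subseteq\tau}\ker(M\to M_{\tau'})$ over faces $\tau'\not\subseteq\tau$. $M$ is $\tau$-coprimary if $M\to M_\tau$ is injective and $\Gamma_\tau(M_\tau)$ is an essential submodule of $M_\tau$ (meets every nonzero submodule nontrivially). A homogeneous $y\in M_q$ is $\tau$-persistent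 if its image in $M_{q'}$ is nonzero for all $q'\in q+\tau$; it is $\bar\tau$-transient if for each $f\in Q_+\setminus\tau$ the image of $y$ in $M_{q+\lambda f}$ vanishes for all sufficiently large integers $\lambda$; it is $\tau$-coprimary if it is both. *)

(* Defs.v *)
From HB Require Import structures.
From mathcomp Require Import all_boot all_order all_algebra.
Set Implicit Arguments. Unset Strict Implicit. Unset Printing Implicit Defensive.
Import GRing.Theory.
Local Open Scope ring_scope.

Section POGroup.
Variable Q : zmodType.
Variable Qp : Q -> Prop.

Definition pole (q q' : Q) : Prop := Qp (q' - q).

Record is_pogroup : Prop := IsPOGroup {
  pog0 : Qp 0;
  pogD : forall a b, Qp a -> Qp b -> Qp (a + b);
  pog_units : forall a, Qp a -> Qp (- a) -> a = 0;
  pog_gen : forall q, exists a b, Qp a /\ Qp b /\ q = a - b }.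

Record is_face (sigma : Q -> Prop) : Prop := IsFace {
  face_sub : forall a, sigma a -> Qp a;
  face0 : sigma 0;
  faceD : forall a b, sigma a -> sigma b -> sigma (a + b);
  face_ideal : forall a b, Qp a -> ~ sigma a -> Qp b -> ~ sigma (a + b) }.

Definition polyhedral : Prop :=
  exists (n : nat) (F : 'I_n -> Q -> Prop),
    forall sigma, is_face sigma -> exists i, forall x, sigma x <-> F i x.

Definition is_ray (rho : Q -> Prop) : Prop :=
  is_face rho /\ forall a b, rho a -> rho b -> pole a b \/ pole b a.

Definition closed_pog : Prop :=
  forall tau, is_face tau ->
    forall a, (Qp a /\ ~ tau a) <->
      exists rho, is_ray rho /\ ~ (forall x, rho x -> tau x) /\
        exists r b, rho r /\ r <> 0 /\ Qp b /\ a = r + b.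

End POGroup.

(* Q-modules: Q-graded k-vector spaces with structure maps M_q -> M_q' *)
(* for q <= q'.  The map qact q q' is only meaningful when q <= q'.    *)
Unset Implicit Arguments.
Record qmodule (k : fieldType) (Q : zmodType) (Qp : Q -> Prop) := QModule {
  qcar :> Q -> lmodType k;
  qact : forall q q' : Q, qcar q -> qcar q';
  qact_linear : forall q q', pole Qp q q' -> linear (qact q q');
  qact_id : forall q (y : qcar q), qact q q y = y;
  qact_comp : forall q q' q'', pole Qp q q' -> pole Qp q' q'' ->
     forall y : qcar q, qact q' q'' (qact q q' y) = qact q q'' y }.
Set Implicit Arguments.
Arguments qact {k Q Qp} _ q q' _.
Arguments qmodule k {Q} Qp.
Arguments qcar {k Q Qp} _ _.

(* "Setoid" presentation of graded modules (data only): carriers,     *)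
(* an equality relation, and the operations.  Used to describe the    *)
(* localizations M_tau concretely without building quotient types.     *)
Record smod (k : fieldType) (Q : zmodType) := SMod {
  scar : Q -> Type;
  seqv : forall q, scar q -> scar q -> Prop;
  szero : forall q, scar q;
  sadd : forall q, scar q -> scar q -> scar q;
  sscale : forall q, k -> scar q -> scar q;
  sact : forall q q', scar q -> scar q' }.
Arguments scar {k Q} _ q.
Arguments seqv {k Q} {_ q} _ _.
Arguments szero {k Q} _ q.
Arguments sadd {k Q} {_ q} _ _.
Arguments sscale {k Q} {_ q} _ _.
Arguments sact {k Q} _ q q' _.

Section SMod.
Variables (k : fieldType) (Q : zmodType) (Qp : Q -> Prop).

Definition smod_of (M : qmodule k Qp) : smod k Q :=
  @SMod k Q (fun q => M q) (fun q => @eq (M q)) (fun q => 0)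
        (fun q => +%R) (fun q => *:%R) (@qact _ _ _ M).

(* Localization N_tau = N (x)_{k[Q_+]} k[Q_+ + Z tau]: an element of degree
   q is a fraction y / x^f with f in tau and y in N_{q+f}; two fractions
   y/x^f and z/x^g are equal iff x^(g+h) y = x^(f+h) z for some h in tau. *)
Record locT (N : smod k Q) (tau : Q -> Prop) (q : Q) : Type := LocT {
  lden : Q; lden_in : tau lden; lnum : scar N (q + lden) }.

Variables (N : smod k Q) (tau : Q -> Prop) (Ht : is_face Qp tau).

Definition loc_eqv q (x y : locT N tau q) : Prop :=
  exists h, tau h /\
    seqv (sact N (q + lden x) (q + lden x + lden y + h) (lnum x))
         (sact N (q + lden y) (q + lden x + lden y + h) (lnum y)).

Definition loc_zero q : locT N tau q :=
  @LocT N tau q 0 (face0 Ht) (szero N (q + 0)).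

Definition loc_add q (x y : locT N tau q) : locT N tau q :=
  @LocT N tau q (lden x + lden y) (faceD Ht (lden_in x) (lden_in y))
    (sadd (sact N (q + lden x) (q + (lden x + lden y)) (lnum x))
          (sact N (q + lden y) (q + (lden x + lden y)) (lnum y))).

Definition loc_scale q (c : k) (x : locT N tau q) : locT N tau q :=
  @LocT N tau q (lden x) (lden_in x) (sscale c (lnum x)).

Definition loc_act q q' (x : locT N tau q) : locT N tau q' :=
  @LocT N tau q' (lden x) (lden_in x) (sact N (q + lden x) (q' + lden x) (lnum x)).

Definition loc : smod k Q :=
  @SMod k Q (locT N tau) loc_eqv loc_zero loc_add loc_scale loc_act.

Definition loc_map q (y : scar N q) : scar loc q :=
  @LocT N tau q 0 (face0 Ht) (sact N q (q + 0) y).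

End SMod.

Section Notions.
Variables (k : fieldType) (Q : zmodType) (Qp : Q -> Prop).

Definition is_submodule (N : smod k Q) (S : forall q, scar N q -> Prop) : Prop :=
  [/\ forall q (x y : scar N q), seqv x y -> S q x -> S q y,
      forall q, S q (szero N q),
      forall q (x y : scar N q), S q x -> S q y -> S q (sadd x y),
      forall q c (x : scar N q), S q x -> S q (sscale c x) &
      forall q q' (x : scar N q), pole Qp q q' -> S q x -> S q' (sact N q q' x)].

Definition nonzero_sub (N : smod k Q) (S : forall q, scar N q -> Prop) : Prop :=
  exists q (x : scar N q), S q x /\ ~ seqv x (szero N q).

Definition essential (N : smod k Q) (S' : forall q, scar N q -> Prop) : Prop :=
  forall S : forall q, scar N q -> Prop, is_submodule S -> nonzero_sub S ->
    exists q (x : scar N q), S q x /\ S' q x /\ ~ seqv x (szero N q).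

Definition Gamma (N : smod k Q) (tau : Q -> Prop) q (x : scar N q) : Prop :=
  forall tau' (H : is_face Qp tau'), ~ (forall a, tau' a -> tau a) ->
    seqv (loc_map H x) (szero (loc N H) q).

Definition coprimary (M : qmodule k Qp) (tau : Q -> Prop) (Ht : is_face Qp tau)
  : Prop :=
  (forall q (y z : M q),
      seqv (loc_map (N := smod_of M) Ht y) (loc_map (N := smod_of M) Ht z) -> y = z)
  /\ essential (N := loc (smod_of M) Ht) (Gamma (N := loc (smod_of M) Ht) tau).

Definition persistent (M : qmodule k Qp) (tau : Q -> Prop) q (y : M q) : Prop :=
  forall f, tau f -> qact M q (q + f) y <> 0.

Definition transient (M : qmodule k Qp) (tau : Q -> Prop) q (y : M q) : Prop :=
  forall f, Qp f -> ~ tau f ->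
    exists n0 : nat, forall lam : nat, (n0 <= lam)%N -> qact M q (q + f *+ lam) y = 0.

Definition coprimary_elt (M : qmodule k Qp) (tau : Q -> Prop) q (y : M q) : Prop :=
  persistent tau y /\ transient tau y.

Definition divides (M : qmodule k Qp) q q' (y : M q) (y' : M q') : Prop :=
  pole Qp q q' /\ qact M q q' y = y'.

End Notions.

(* Main.v *)
Require Import Defs.
From mathcomp Require Import all_boot all_order all_algebra.
From Stdlib Require Import Classical.
Import GRing.Theory.
Local Open Scope ring_scope.

Section H.
Variables (k : fieldType) (Q : zmodType) (Qp : Q -> Prop) (M : qmodule k Qp).
Notation act := (qact M).

Lemma act0 p p' : pole Qp p p' -> act p p' 0 = 0.
Proof. move=> H. have := zmod_morphism_linear (@qact_linear _ _ _ M _ _ H) 0 0.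
rewrite subrr => E; by rewrite E subrr. Qed.
Lemma actB p p' (y z : M p) : pole Qp p p' -> act p p' (y - z) = act p p' y - act p p' z.
Proof. move=> H. exact: (zmod_morphism_linear (@qact_linear _ _ _ M _ _ H)). Qed.
Lemma actD p p' (y z : M p) : pole Qp p p' -> act p p' (y + z) = act p p' y + act p p' z.
Proof. move=> H. have := @qact_linear _ _ _ M _ _ H 1 y z. by rewrite !scale1r. Qed.
Lemma actZ p p' c (y : M p) : pole Qp p p' -> act p p' (c *: y) = c *: act p p' y.
Proof. move=> H. exact: (scalable_linear (@qact_linear _ _ _ M _ _ H)). Qed.
Lemma comp p1 p2 p3 (y : M p1) : pole Qp p1 p2 -> pole Qp p2 p3 -> act p2 p3 (act p1 p2 y) = act p1 p3 y.
Proof. move=> H1 H2; exact: (@qact_comp _ _ _ M _ _ _ H1 H2). Qed.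
End H.

Section Main.
Variables (k : fieldType) (Q : zmodType) (Qp : Q -> Prop) (HQ : is_pogroup Qp).
Variables (tau : Q -> Prop) (Ht : is_face Qp tau) (M : qmodule k Qp).
Notation act := (qact M).
Notation N := (smod_of M).

Lemma Qp0 : Qp 0. Proof. exact: pog0 HQ. Qed.
Lemma QpD a b : Qp a -> Qp b -> Qp (a + b). Proof. exact: (pogD HQ). Qed.
Lemma pole_refl p : pole Qp p p. Proof. by rewrite /pole subrr; exact: Qp0. Qed.
Lemma pole_addr p a : Qp a -> pole Qp p (p + a).
Proof. by rewrite /pole addrC addKr. Qed.
Lemma pole_trans a b c : pole Qp a b -> pole Qp b c -> pole Qp a c.
Proof. rewrite /pole => H1 H2. have -> : c - a = (c - b) + (b - a) by rewrite addrA subrK.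
exact: QpD. Qed.
Lemma pole_eq p p' : p = p' -> pole Qp p p'.
Proof. move=> ->; exact: pole_refl. Qed.


Lemma tauQ a : tau a -> Qp a. Proof. exact: (face_sub Ht). Qed.
Lemma tauD a b : tau a -> tau b -> tau (a + b). Proof. exact: (faceD Ht). Qed.

Ltac qp := first [ assumption | exact: Qp0 | by apply: tauQ | by apply: QpD; qp ].
Ltac pl := first [ exact: pole_refl | (eapply pole_addr; qp) | (eapply pole_trans; [ | eapply pole_addr; qp ]; pl) ].

Lemma eqv0 q (x y : locT N tau q) : lnum y = 0 ->
  (loc_eqv x y <-> exists e, tau e /\ act (q + lden x) (q + lden x + e) (lnum x) = 0).
Proof.
case: x => dx hx nx; case: y => dy hy ny /= ->; rewrite /loc_eqv /=; split.
  case=> h [th E]. exists (dy + h); split; first exact: tauD.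
  rewrite addrA E act0 //. rewrite (addrAC q dx dy). pl.
case=> e [te E]; exists e; split => //.
rewrite act0; last by rewrite (addrAC q dx dy); pl.
rewrite (addrAC (q + dx) dy e) -(@comp _ _ _ M _ (q + dx + e)); try pl.
by rewrite E act0 //; pl.
Qed.

Lemma pole_shift p p' a : pole Qp p p' -> pole Qp (p + a) (p' + a).
Proof. by rewrite /pole opprD addrACA subrr addr0. Qed.

Lemma face_muln (s : Q -> Prop) a n : is_face Qp s -> s a -> s (a *+ n).
Proof. move=> F sa; elim: n => [|n IH]; first by rewrite mulr0n; exact: (face0 F).
by rewrite mulrS; apply: (faceD F). Qed.

Lemma inj_part (H : forall q (y : M q), y <> 0 ->
     exists q' (y' : M q'), divides y y' /\ coprimary_elt tau y') :
  forall q (y z : M q),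
      seqv (loc_map (N := smod_of M) Ht y) (loc_map (N := smod_of M) Ht z) -> y = z.
Proof.
move=> q y z; rewrite /= /loc_eqv /=; case=> h [th E].
rewrite comp in E; try pl. rewrite comp in E; try pl.
apply/eqP; rewrite -subr_eq0; apply/eqP.
case: (eqVneq (y - z) 0) => // /eqP nz. exfalso.
have [q' [y' [[Hp Hd] [Hper _]]]] := H _ _ nz.
apply: (Hper h th). rewrite -Hd comp //; last by pl.
have P1 : pole Qp q (q + 0 + 0 + h) by pl.
have P2 : pole Qp (q + 0 + 0 + h) (q' + h) by rewrite !addr0; apply: pole_shift.
rewrite -(@comp _ _ _ M _ _ _ _ P1 P2) actB // E subrr act0 //.
Qed.

Lemma ess_part (H : forall q (y : M q), y <> 0 ->
     exists q' (y' : M q'), divides y y' /\ coprimary_elt tau y') :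
  essential Qp (N := loc (smod_of M) Ht) (Gamma Qp (N := loc (smod_of M) Ht) tau).
Proof.
move=> S HS [q0 [[d hd n] [Sx nx0]]].
have n0 : n <> 0.
  move=> En; apply: nx0; apply/eqv0 => //; exists 0; split; first exact: (face0 Ht).
  by rewrite /= En act0 //; pl.
have [q' [y' [[Hp Hd] [Hper Htr]]]] := H _ _ n0.
have [q1 Eq1 Pq1] : exists2 q1, q1 + d = q' & pole Qp q0 q1.
  exists (q0 + (q' - (q0 + d))); first by rewrite addrAC subrKC.
  by apply: pole_addr.
case: HS => _ _ _ _ Hact.
exists q1, (sact (loc (smod_of M) Ht) q0 q1 (LocT hd n)); split; first exact: Hact.
split; last first.
  move/eqv0 => /(_ (erefl _)) [e [te /= E]].
  have P1 : pole Qp (q0 + d) (q1 + d) by apply: pole_shift.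
  rewrite comp // in E; last by pl.
  move: E; rewrite Eq1 => E.
  apply: (Hper e te); rewrite -Hd comp //; pl.
move=> tau' H' nsub.
have [a [ta nta]] : exists a, tau' a /\ ~ tau a.
  apply: NNPP => C; apply: nsub => a ta; apply: NNPP => nta; apply: C; by exists a.
have [m0 Hm0] := Htr a (face_sub H' ta) nta.
rewrite /= /loc_eqv /=.
exists (a *+ m0); split; first exact: face_muln.
have Qa : Qp (a *+ m0) := face_sub H' (@face_muln tau' a m0 H' ta : tau' (a *+ m0)).
apply/eqv0; first by apply: act0; pl.
exists 0; split; first exact: (face0 Ht).
rewrite /= !addr0 !qact_id (addrAC q1 _ d) comp //; last by pl.
rewrite Eq1.
rewrite -(@comp _ _ _ M _ q') //; last by pl.
by rewrite Hd; apply: Hm0.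
exact: pole_shift.
Qed.


Lemma QpMn a m : Qp a -> Qp (a *+ m).
Proof. move=> Ha; elim: m => [|m IH]; first by rewrite mulr0n; exact: Qp0.
by rewrite mulrS; apply: QpD. Qed.

Lemma scale_ext q V W c (y : M q) : (c = 0 \/ pole Qp q V) -> pole Qp V W ->
  act V W (c *: act q V y) = c *: act q W y /\ (c = 0 \/ pole Qp q W).
Proof.
case=> [->|P] PW; first by rewrite !scale0r act0 //; split => //; left.
rewrite actZ // comp //; split => //; right; exact: (@pole_trans _ _ _ P PW).
Qed.

Lemma ext_lemma q p V W c (y : M q) (n : M p) : act p V n = c *: act q V y ->
  (c = 0 \/ pole Qp q V) -> pole Qp p V -> pole Qp V W ->
  act p W n = c *: act q W y /\ (c = 0 \/ pole Qp q W).
Proof. move=> E D P1 P2; rewrite -(@comp _ _ _ M _ _ _ _ P1 P2) E; exact: scale_ext. Qed.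
Arguments ext_lemma {q p V W c y n}.

Definition Sgen q (y : M q) q' (z : locT N tau q') : Prop :=
  exists c e, tau e /\
   act (q' + lden z) (q' + lden z + e) (lnum z) = c *: act q (q' + lden z + e) y /\
   (c = 0 \/ pole Qp q (q' + lden z + e)).

Lemma Sgen_sub q (y : M q) : is_submodule Qp (N := loc N Ht) (Sgen q y).
Proof.
split.
- move=> q' [dz hz nz] [dw hw nw] [h [th /= E]] [c [e [te [/= Ez Dz]]]].
  exists c, (dz + h + e); split; first by apply: tauD => //; apply: tauD.
  rewrite /=.
  have P1 : pole Qp (q' + dw) (q' + dz + dw + h) by rewrite (addrAC q' dz dw); pl.
  have P2 : pole Qp (q' + dz + dw + h) (q' + dw + (dz + h + e)).
    by rewrite !addrA (addrAC q' dw dz); pl.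
  rewrite -(@comp _ _ _ M _ _ _ _ P1 P2) -E comp; last by [].
    apply: (ext_lemma Ez Dz); first by pl.
    by rewrite !addrA (addrAC q' dw dz) (addrAC (q' + dz) dw) (addrAC (q'+dz+h) dw e) 
        (addrAC (q' + dz) h e); pl.
  by pl.
- move=> q'; exists 0, 0; split; first exact: (face0 Ht).
  by rewrite /= !scale0r act0; [split => //; left | pl].
- move=> q' [dz hz nz] [dw hw nw] [c1 [e1 [te1 [/= E1 D1]]]] [c2 [e2 [te2 [/= E2 D2]]]].
  exists (c1 + c2), (e1 + e2); split; first exact: tauD.
  rewrite /=.
  have Pz : pole Qp (q' + dz + e1) (q' + (dz + dw) + (e1 + e2)).
    by rewrite !addrA (addrAC (q' + dz) dw e1); pl.
  have Pw : pole Qp (q' + dw + e2) (q' + (dz + dw) + (e1 + e2)).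
    by rewrite !addrA (addrAC q' dz dw) (addrAC (q' + dw + dz) e1 e2)
      (addrAC (q' + dw) dz e2); pl.
  have [Ez Dz'] := ext_lemma E1 D1 ltac:(pl) Pz.
  have [Ew Dw'] := ext_lemma E2 D2 ltac:(pl) Pw.
  rewrite actD; last by pl.
  have Pdw : pole Qp (q' + dw) (q' + (dz + dw)) by rewrite (addrC dz dw) addrA; pl.
  have Pdz : pole Qp (q' + dz) (q' + (dz + dw)) by rewrite addrA; pl.
  rewrite !comp //; try by pl.
  rewrite Ez Ew scalerDl; split => //.
  case: Dz' => [->|]; last by right.
  case: Dw' => [->|]; last by right.
  by left; rewrite addr0.
- move=> q' a [dz hz nz] [c [e [te [/= E D]]]].
  exists (a * c), e; split => //; rewrite /= actZ; last by pl.
  rewrite E scalerA; split => //; case: D => [->|]; last by right.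
  by left; rewrite mulr0.
- move=> q' q'' [dz hz nz] Pq [c [e [te [/= E D]]]].
  exists c, e; split => //; rewrite /= comp; last by pl.
    apply: (ext_lemma E D); first by pl.
    by apply: pole_shift; apply: pole_shift.
  by apply: pole_shift.
Qed.

Lemma fwd_part (Hclosed : closed_pog Qp) (C : coprimary M Ht) q (y : M q) : y <> 0 ->
  exists q' (y' : M q'), divides y y' /\ coprimary_elt tau y'.
Proof.
move=> ny; case: C => Cinj Cess.
have Sx : Sgen q y q (loc_map (N := N) Ht y).
  exists 1, 0; split; first exact: (face0 Ht).
  rewrite /= comp; [|pl|pl]. rewrite scale1r; split => //; right; pl.
have nx : ~ seqv (loc_map (N := N) Ht y) (szero (loc N Ht) q).
  move=> E; apply: ny; apply: Cinj.
  move: E; rewrite /= /loc_eqv /= => -[h [th E]]; exists h; split => //.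
  by rewrite E (@act0 _ _ _ M q) //; pl.
have [q2 [[dz hz nz] [[c [e [te [/= Ez Dz]]]] [Gz nz0]]]] :=
  Cess _ (Sgen_sub q y) (ex_intro _ q (ex_intro _ _ (conj Sx nx))).
have c0 : c <> 0.
  move=> c0; apply: nz0; apply/eqv0 => //; exists e; split => //.
  by rewrite Ez c0 scale0r.
have PT : pole Qp q (q2 + dz + e) by case: Dz.
set T := q2 + dz + e in Ez PT.
exists T, (act q T y); split; first by split.
split.
  move=> f tf Hf; apply: nz0; apply/eqv0 => //; exists (e + f); split; first exact: tauD.
  rewrite addrA -(@comp _ _ _ M _ T) /T; [|pl|pl].
  by rewrite Ez actZ; [rewrite Hf scaler0 | pl].
move=> f Qf ntf.
have [rho [Rrho [nsub [r [b [rr [r0 [Qb Ef]]]]]]]] := (Hclosed tau Ht f).1 (conj Qf ntf).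
have Frho := Rrho.1.
have := Gz rho Frho nsub; rewrite /= /loc_eqv /= => -[h [hr E']].
have Qh : Qp h := face_sub Frho hr.
have Qr : Qp r := face_sub Frho rr.
move/eqv0: E' => /(_ ltac:(by apply: act0; pl)) -[e' [te' E']].
move: E'; rewrite /= !addr0 !qact_id comp; first last.
- by pl.
- by rewrite (addrAC q2 h dz); pl.
move=> E'.
have W0 : act T (T + h) (act q T y) = 0.
  apply: Cinj; rewrite /= /loc_eqv /=; exists e'; split => //.
  rewrite !addr0 !qact_id act0; last by pl.
  rewrite comp; [|pl|pl]. rewrite comp; [|exact: (@pole_trans _ _ _ PT ltac:(pl))|pl].
  have PX : pole Qp (q2 + dz) (T + h + e') by rewrite /T; pl.
  have [E2 _] := ext_lemma Ez Dz ltac:(rewrite /T; pl) (ltac:(pl) : pole Qp T (T + h + e')).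
  have : c *: act q (T + h + e') y = 0.
    have P5 : pole Qp (q2 + dz) (q2 + h + dz + e') by rewrite (addrAC q2 h dz); pl.
    have P4 : pole Qp (q2 + h + dz + e') (T + h + e').
      by rewrite /T (addrAC (q2 + dz) e h) (addrAC (q2 + dz + h) e e') (addrAC q2 dz h); pl.
    by rewrite -E2 -(@comp _ _ _ M _ _ _ _ P5 P4) E' act0.
  by move/eqP; rewrite scaler_eq0 => /orP [/eqP|/eqP].
pose sg := fun a => Qp a /\ exists l : nat, Qp (r *+ l - a).
have Fsg : is_face Qp sg.
  split.
  - by move=> a [].
  - split; first exact: Qp0. by exists 0%N; rewrite mulr0n subr0; exact: Qp0.
  - move=> a1 a2 [Q1 [l1 H1]] [Q2 [l2 H2]]; split; first exact: QpD.
    by exists (l1 + l2)%N; rewrite mulrnDr opprD addrACA; apply: QpD.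
  - move=> a1 a2 Q1 n1 Q2 [_ [l H]]; apply: n1; split => //; exists l.
    have -> : r *+ l - a1 = (r *+ l - (a1 + a2)) + a2 by rewrite opprD addrA subrK.
    exact: QpD.
have sh : sg h.
  apply: NNPP => nh.
  have nsub' : ~ (forall x, rho x -> sg x) by move=> Hall; apply: nh; exact: Hall.
  have [_ ] := (Hclosed sg Fsg r).2 (ex_intro _ rho (conj Rrho (conj nsub'
     (ex_intro _ r (ex_intro _ 0 (conj rr (conj r0 (conj Qp0 (esym (addr0 r)))))))))).
  apply; split => //; exists 1%N; rewrite mulr1n subrr; exact: Qp0.
case: sh => _ [l Hl].
exists l => lam Hlam.
have P3 : pole Qp (T + h) (T + f *+ lam).
  have -> : T + f *+ lam = T + r *+ l + (r *+ (lam - l) + b *+ lam).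
    by rewrite Ef mulrnDl -{1}(subnKC Hlam) mulrnDr !addrA.
  apply: (@pole_trans _ (T + r *+ l)).
    by rewrite /pole opprD addrACA subrr add0r.
  by apply: pole_addr; apply: QpD; apply: QpMn.
by rewrite -(@comp _ _ _ M _ (T + h)) // ?W0 ?act0 //; pl.
Qed.
End Main.

Theorem theorem4p13 (k : fieldType) (Q : zmodType) (Qp : Q -> Prop)
  (HQ : is_pogroup Qp) (Hpoly : polyhedral Qp) (Hclosed : closed_pog Qp)
  (tau : Q -> Prop) (Htau : is_face Qp tau) (M : qmodule k Qp) :
  coprimary M Htau <->
  (forall q (y : M q), y <> 0 ->
     exists q' (y' : M q'), divides y y' /\ coprimary_elt tau y').
Proof.
split.
- move=> C q y ny; exact: (@fwd_part k Q Qp HQ tau Htau M Hclosed C q y ny).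
- move=> H; split.
  + exact: (@inj_part k Q Qp HQ tau Htau M H).
  + exact: (@ess_part k Q Qp HQ tau Htau M H).
Qed.
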